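(* Let $X$ be a Hausdorff locally convex space, let $T:X\rightrightarrows X^{*}$, and let $V\subset X$ be non-empty, algebraically open (i.e. $V=\operatorname{core}V$) and convex, such that $T|_{V}$ is a non-void monotone operator and $T$ is $V$-NI. Then \[ [\psi_{T|_{V}}=c]\cap (V\times X^{*})=[\varphi_{T|_{V}}=c]\cap (V\times X^{*})=[\varphi_{T|_{V}}\le c]\cap (V\times X^{*}), \] and this set is the unique $V$-representable extension and the unique maximal monotone extension in $V\times X^{*}$ of $T|_{V}$. If, in addition, $T$ is a non-void monotone operator, then moreover \[ [\psi_{T|_{V}}=c]\cap (V\times X^{*})=[\varphi_{T}=c]\cap (V\times X^{*})=[\psi_{T}=c]\cap (V\times X^{*}). \] If, in addition, $T$ is a non-void monotone operator and $T$ is $V$-representable, then $V$ identifies $T$ and \[ [\psi_{T|_{V}}=c]\cap (V\times X^{*})=[\varphi_{T|_{V}}=c]\cap (V\times X^{*})=[\varphi_{T|_{V}}\le c]\cap (V\times X^{*})=[\varphi_{T}=c]\cap (V\times X^{*})=[\psi_{T}=c]\cap (V\times X^{*})=\operatorname{Graph}(T|_{V}). \]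
   Context: $X$ is a non-trivial Hausdorff locally convex space with topology $\tau$, $X^{*}$ its dual with the weak-star topology $w^{*}$, $Z=X\times X^{*}$, and $c(x,x^{*})=\langle x,x^{*}\rangle$ is the duality coupling. For $T\subset X\times X^{*}$ and $V\subset X$, $T|_{V}$ is the operator with $\operatorname{Graph}T|_{V}=\operatorname{Graph}T\cap(V\times X^{*})$. The Fitzpatrick function is $\varphi_{T}(x,x^{*})=\sup\{\langle x,u^{*}\rangle+\langle u,x^{*}\rangle-\langle u,u^{*}\rangle\mid (u,u^{*})\in T\}$, and $\psi_{T}$ is the $\tau\times w^{*}$-lower semicontinuous convex hull of $c+\iota_{\operatorname{Graph}T}$. For functions $f,g$, $[f\le g]=\{z\mid f(z)\le g(z)\}$, similarly $[f=g]$. $T$ is $V$-NI if $\varphi_{T|_{V}}\ge c$ on $V\times X^{*}$. $T$ is $V$-representable if $V\cap D(T)\ne\emptyset$ and there is a proper convex $\tau\times w^{*}$-lsc $h\ge c$ on $Z$ with $[h=c]\cap(V\times X^{*})=\operatorname{Graph}(T|_{V})$. $V$ identifies $T$ if every $(x,x^{*})\in V\times X^{*}$ with $\varphi_{T|_{V}}(x,x^{*})\le \langle x,x^{*}\rangle$ (i.e. monotonically related to $T|_V$) belongs to $\operatorname{Graph}T$. *)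

(* Defs.v *)
From HB Require Import structures.
From mathcomp Require Import all_boot all_order all_algebra.
From mathcomp Require Import all_classical all_reals all_analysis.

Set Implicit Arguments.
Unset Strict Implicit.
Unset Printing Implicit Defensive.

Import Order.TTheory GRing.Theory Num.Theory numFieldTopology.Exports.

Local Open Scope classical_set_scope.
Local Open Scope ring_scope.

Section Fitzpatrick.
Context {R : realType} {X : tvsType R}.

(* The topological dual X^* : continuous linear functionals X -> R.
   Elements of X^* are represented by the underlying functions. *)
Definition dual_space : set (X -> R) :=
  [set f | (forall (a : R) (x y : X), f (a *: x + y) = a * f x + f y)
           /\ (forall x0 : X, f y @[y --> x0] --> f x0)].

Definition Zsp : set (X * (X -> R)) := [set z | dual_space z.2].

(* duality coupling c(x, x^* ) = <x, x^*> *)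
Definition coupling (z : X * (X -> R)) : R := z.2 z.1.

(* Operators T : X ==> X^* are given by their graphs, T `<=` Zsp. *)
Definition restr_op (T : set (X * (X -> R))) (V : set X) : set (X * (X -> R)) :=
  T `&` [set z | V z.1].

Definition dom_op (T : set (X * (X -> R))) : set X :=
  [set x | exists xs, T (x, xs)].

Definition nonvoid_op (T : set (X * (X -> R))) : Prop := T !=set0.

Definition mon_related (z w : X * (X -> R)) : Prop :=
  0 <= z.2 (z.1 - w.1) - w.2 (z.1 - w.1).

Definition monotone_op (T : set (X * (X -> R))) : Prop :=
  forall z w, T z -> T w -> mon_related z w.

Definition maximal_monotone_in (V : set X) (S : set (X * (X -> R))) : Prop :=
  S `<=` Zsp /\ S `<=` [set z | V z.1] /\ monotone_op S /\
  forall z, Zsp z -> V z.1 -> (forall w, S w -> mon_related z w) -> S z.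

Definition fitzpatrick (T : set (X * (X -> R))) (z : X * (X -> R)) : \bar R :=
  ereal_sup [set ((u.2 z.1 + z.2 u.1 - u.2 u.1)%:E) | u in T].

Definition indic_graph (T : set (X * (X -> R))) (z : X * (X -> R)) : \bar R :=
  if `[< T z >] then 0%E else +oo%E.

Definition zcomb (l : R) (z w : X * (X -> R)) : X * (X -> R) :=
  (l *: z.1 + (1 - l) *: w.1, fun x => l * z.2 x + (1 - l) * w.2 x).

(* convexity of h : Z -> \bar R  (convex epigraph) *)
Definition convex_on_Z (h : X * (X -> R) -> \bar R) : Prop :=
  forall z w (r s l : R), Zsp z -> Zsp w -> (h z <= r%:E)%E -> (h w <= s%:E)%E ->
    0 <= l <= 1 -> (h (zcomb l z w) <= (l * r + (1 - l) * s)%:E)%E.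

(* (relative) openness in Z for the product topology tau x w^* *)
Definition tw_open (U : set (X * (X -> R))) : Prop :=
  forall z, Zsp z -> U z ->
    exists N : set X, nbhs z.1 N /\
    exists (F : seq X) (e : R), 0 < e /\
      forall x ys, N x -> dual_space ys ->
        (forall u, u \in F -> `|ys u - z.2 u| < e) -> U (x, ys).

Definition tw_lsc (h : X * (X -> R) -> \bar R) : Prop :=
  forall a : R, tw_open [set z | (a%:E < h z)%E].

Definition proper_on_Z (h : X * (X -> R) -> \bar R) : Prop :=
  (forall z, Zsp z -> h z != -oo%E) /\ exists z, Zsp z /\ (h z < +oo)%E.

(* psi_T : the tau x w^*-lsc convex hull of c + iota_T, i.e. the greatest
   convex tau x w^*-lsc function on Z majorized by c + iota_T. *)
Definition psi_hull (T : set (X * (X -> R))) (z : X * (X -> R)) : \bar R :=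
  ereal_sup [set h z | h in
    [set h | convex_on_Z h /\ tw_lsc h /\
             forall w, Zsp w -> (h w <= (coupling w)%:E + indic_graph T w)%E]].

Definition V_NI (V : set X) (T : set (X * (X -> R))) : Prop :=
  forall z, Zsp z -> V z.1 -> ((coupling z)%:E <= fitzpatrick (restr_op T V) z)%E.

Definition V_representable (V : set X) (T : set (X * (X -> R))) : Prop :=
  (V `&` dom_op T !=set0) /\
  exists h : X * (X -> R) -> \bar R,
    proper_on_Z h /\ convex_on_Z h /\ tw_lsc h /\
    (forall z, Zsp z -> ((coupling z)%:E <= h z)%E) /\
    (forall z, Zsp z -> V z.1 -> (h z = (coupling z)%:E <-> restr_op T V z)).

Definition identifies (V : set X) (T : set (X * (X -> R))) : Prop :=
  forall z, Zsp z -> V z.1 -> (fitzpatrick (restr_op T V) z <= (coupling z)%:E)%E -> T z.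

Definition eqc_on (V : set X) (f : X * (X -> R) -> \bar R) : set (X * (X -> R)) :=
  [set z | Zsp z /\ V z.1 /\ f z = (coupling z)%:E].
Definition lec_on (V : set X) (f : X * (X -> R) -> \bar R) : set (X * (X -> R)) :=
  [set z | Zsp z /\ V z.1 /\ (f z <= (coupling z)%:E)%E].

Definition algebraically_open (V : set X) : Prop :=
  forall x, V x -> forall y : X, exists2 d : R, 0 < d &
    forall t : R, 0 <= t <= d -> V (x + t *: y).

Definition convex_subset (V : set X) : Prop :=
  forall x y (l : R), V x -> V y -> 0 <= l <= 1 -> V (l *: x + (1 - l) *: y).

End Fitzpatrick.

(* Main.v *)
Require Import Defs.
From HB Require Import structures.
From mathcomp Require Import all_boot all_order all_algebra.
From mathcomp Require Import all_classical all_reals all_analysis.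
From mathcomp.algebra_tactics Require Import ring lra.
Set Implicit Arguments. Unset Strict Implicit. Unset Printing Implicit Defensive.
Import Order.TTheory GRing.Theory Num.Theory.
Local Open Scope classical_set_scope.
Local Open Scope ring_scope.
Import numFieldTopology.Exports.

Section HahnBanach.
Context {R : realType} {Y : lmodType R}.
Variable p : Y -> R.
Hypothesis p_add : forall x y, p (x + y) <= p x + p y.
Hypothesis p_scale : forall (a : R) x, 0 < a -> p (a *: x) = a * p x.

Lemma p0 : p 0 = 0.
Proof.
have := p_scale (0 : Y) (ltr0n R 2); rewrite scaler0 => h.
lra.
Qed.

Lemma p_neg (a : R) x : a < 0 -> a * p x <= p (a *: x).
Proof.
move=> a0; have := p_add (a *: x) ((- a) *: x).
rewrite -scalerDl subrr scale0r p0 (p_scale (a := - a)) ?oppr_gt0 // => h; lra.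
Qed.

Definition lin_graph (G : set (Y * R)) :=
  [/\ (forall y v v', G (y, v) -> G (y, v') -> v = v'),
      (forall a y1 v1 y2 v2, G (y1, v1) -> G (y2, v2) -> G (a *: y1 + y2, a * v1 + v2)) &
      (forall y v, G (y, v) -> v <= p y)].

Variable y0 : Y.
Definition G0 : set (Y * R) := [set z | exists a : R, z = (a *: y0, a * p y0)].

Lemma G0_lin : lin_graph G0.
Proof.
split.
- move=> y v v' [a [-> ->]] [b [yE ->]].
  have [->|ab] := eqVneq a b; first by [].
  have : (a - b) *: y0 = 0 by rewrite scalerBl yE subrr.
  move/eqP; rewrite scaler_eq0 subr_eq0 (negbTE ab) /= => /eqP ->.
  by rewrite p0 !mulr0.
- move=> a y1 v1 y2 v2 [b [-> ->]] [c [-> ->]].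
  exists (a * b + c); rewrite scalerDl scalerA; congr (_, _); ring.
- move=> y v [a [-> ->]].
  have [a0|a0|->] := ltgtP a 0.
  + exact: p_neg.
  + by rewrite p_scale.
  + by rewrite scale0r p0 mul0r.
Qed.

Lemma lin_graph0 G y v : lin_graph G -> G (y, v) -> G (0, 0).
Proof.
case=> _ Gc _ Gyv; have := Gc (-1) y v y v Gyv Gyv.
by rewrite scaleN1r addNr mulN1r addNr.
Qed.

Lemma lin_graphZ G a y v : lin_graph G -> G (y, v) -> G (a *: y, a * v).
Proof.
move=> lG Gyv; have G00 := lin_graph0 lG Gyv.
case: lG => _ Gc _; have := Gc a y v 0 0 Gyv G00.
by rewrite addr0 addr0.
Qed.

Lemma lin_graphD G y v y' v' : lin_graph G -> G (y, v) -> G (y', v') -> G (y + y', v + v').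
Proof.
move=> lG Gyv Gyv'; case: lG => _ Gc _; have := Gc 1 y v y' v' Gyv Gyv'.
by rewrite scale1r mul1r.
Qed.

Section Extension.
Variable G : set (Y * R).
Hypothesis lG : lin_graph G.
Hypothesis Gne : G (0, 0).
Variable y1 : Y.
Hypothesis y1n : forall v, ~ G (y1, v).

Let Sa : set R := [set r | exists d v, G (d, v) /\ r = v - p (d - y1)].

Let Sa_ub d' v' : G (d', v') -> ubound Sa (p (d' + y1) - v').
Proof.
move=> Gd' r [d [v [Gd ->]]].
case: lG => _ _ Gp.
have := Gp _ _ (lin_graphD lG Gd Gd').
have := p_add (d - y1) (d' + y1).
have -> : d - y1 + (d' + y1) = d + d' by rewrite addrCA subrK addrC.
move=> h1 h2; lra.
Qed.

Let alpha := sup Sa.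

Let Sa_hs : has_sup Sa.
Proof.
split; first by exists (0 - p (0 - y1)), 0, 0.
by exists (p (0 + y1) - 0); exact: Sa_ub.
Qed.

Let alpha_ge d v : G (d, v) -> v - p (d - y1) <= alpha.
Proof. by move=> Gd; apply: sup_upper_bound => //; exists d, v. Qed.

Let alpha_le d v : G (d, v) -> alpha <= p (d + y1) - v.
Proof. by move=> Gd; apply: ge_sup; [case: Sa_hs|exact: Sa_ub]. Qed.

Definition Gext : set (Y * R) :=
  [set z | exists d v (l : R), G (d, v) /\ z = (d + l *: y1, v + l * alpha)].

Lemma Gext_sub : G `<=` Gext.
Proof. by move=> [d v] Gd; exists d, v, 0; rewrite scale0r mul0r !addr0. Qed.

Lemma Gext_new : Gext (y1, alpha).
Proof. by exists 0, 0, 1; rewrite scale1r mul1r !add0r. Qed.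

Lemma Gext_lin : lin_graph Gext.
Proof.
split.
- move=> y w w' [d [v [l [Gd [yE ->]]]]] [d' [v' [l' [Gd' [yE' ->]]]]].
  have [ll'|ll'] := eqVneq l l'.
    subst l'; move: yE'; rewrite yE => /addIr dd; subst d'.
    by case: lG => Gf _ _; rewrite (Gf _ _ _ Gd Gd').
  exfalso.
  have e : (l - l') *: y1 = d' - d.
    have e0 : d + l *: y1 = d' + l' *: y1 by rewrite -yE.
    have -> : (l - l') *: y1 = (d + l *: y1) - (d + l' *: y1).
      by rewrite scalerBl opprD addrACA subrr add0r.
    by rewrite e0 opprD addrACA subrr addr0.
  elim: (@y1n ((l - l')^-1 * (v' - v))).
  have -> : y1 = (l - l')^-1 *: (d' - d).
    by rewrite -e scalerA mulVf ?scale1r // subr_eq0.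
  apply: lin_graphZ => //.
  have := lin_graphD lG Gd' (lin_graphZ (-1) lG Gd).
  by rewrite scaleN1r mulN1r.
- move=> a z1 w1 z2 w2 [d [v [l [Gd [-> ->]]]]] [d' [v' [l' [Gd' [-> ->]]]]].
  exists (a *: d + d'), (a * v + v'), (a * l + l'); split.
    by case: lG => _ Gc _; exact: Gc.
  congr (_, _).
    by rewrite scalerDl scalerDr scalerA !addrA; congr (_ + _); rewrite addrAC.
  ring.
- move=> y w [d [v [l [Gd [-> ->]]]]].
  have [l0|l0|->] := ltgtP l 0; last by rewrite scale0r mul0r !addr0; case: lG => _ _; apply.
  +
    set m := - l.
    have m0 : 0 < m by rewrite oppr_gt0.
    have := alpha_ge (lin_graphZ m^-1 lG Gd).
    have -> : d + l *: y1 = m *: (m^-1 *: d - y1).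
      by rewrite scalerBr scalerA mulfV ?gt_eqF // scale1r /m scaleNr opprK.
    rewrite p_scale // => h.
    have : m * (m^-1 * v - p (m^-1 *: d - y1)) <= m * alpha by rewrite ler_pM2l.
    rewrite mulrBr mulrA mulfV ?gt_eqF // mul1r /m => h2; lra.
  + have := alpha_le (lin_graphZ l^-1 lG Gd).
    have -> : d + l *: y1 = l *: (l^-1 *: d + y1).
      by rewrite scalerDr scalerA mulfV ?gt_eqF // scale1r.
    rewrite p_scale // => h.
    have : l * alpha <= l * (p (l^-1 *: d + y1) - l^-1 * v) by rewrite ler_pM2l.
    rewrite mulrBr mulrA mulfV ?gt_eqF // mul1r => h2; lra.
Qed.

End Extension.

Theorem hahn_banach : exists L : Y -> R,
  [/\ forall a x y, L (a *: x + y) = a * L x + L y,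
      forall x, L x <= p x & L y0 = p y0].
Proof.
pose P := [set G : set (Y * R) | (G = set0 \/ G0 `<=` G) /\ lin_graph G].
have [A [[A0 lA] Amax]] : exists A, P A /\ forall B, A `<` B -> ~ P B.
  apply: Zorn_bigcup => F FP Ftot.
  have [Fe|[G1 FG1 G1ne]] : (forall G, F G -> G = set0) \/ exists2 G, F G & G !=set0.
    have [h|h] := pselect (exists2 G, F G & G !=set0); [by right|left].
    move=> G FG; apply/nonemptyPn => Gne; apply: h; by exists G.
  - have U0 : \bigcup_(X in F) X = set0.
      by apply/seteqP; split => // z [G FG]; rewrite (Fe _ FG).
    rewrite /P /= U0; split; [by left|split => [? ? ? []|? ? ? ? ? []|? ? []]].
  have G0G1 : G0 `<=` G1.
    by case: (FP _ FG1) => [[G1e|//] _]; move: G1ne; rewrite G1e => -[].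
  rewrite /P /=; split.
    right => z G0z; exists G1 => //; exact: G0G1.
  have common : forall z1 z2, (\bigcup_(X in F) X) z1 -> (\bigcup_(X in F) X) z2 ->
      exists2 G, F G & G z1 /\ G z2.
    move=> z1 z2 [Ga FGa Gaz] [Gb FGb Gbz].
    have [ab|ba] := Ftot _ _ FGa FGb.
      by exists Gb => //; split => //; exact: ab.
    by exists Ga => //; split => //; exact: ba.
  split.
  - move=> y v v' h1 h2; have [G FG [Gz1 Gz2]] := common _ _ h1 h2.
    by case: (FP _ FG) => _ [Gf _ _]; exact: Gf Gz1 Gz2.
  - move=> a z1 w1 z2 w2 h1 h2; have [G FG [Gz1 Gz2]] := common _ _ h1 h2.
    exists G => //; by case: (FP _ FG) => _ [_ Gc _]; exact: Gc.
  - move=> y v [G FG Gz]; by case: (FP _ FG) => _ [_ _ Gp]; exact: Gp Gz.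
have G0A : G0 `<=` A.
  case: A0 => // Ae; exfalso; apply: (Amax G0).
    rewrite Ae; split => // /(_ (0, 0)) h.
    by case: h; exists 0; rewrite scale0r mul0r.
  by split; [right|exact: G0_lin].
have A00 : A (0, 0) by apply: G0A; exists 0; rewrite scale0r mul0r.
have Atot : forall y, exists v, A (y, v).
  move=> y; apply: contrapT => hy.
  have hy' : forall v, ~ A (y, v) by move=> v Av; apply: hy; exists v.
  apply: (Amax (Gext A y)).
    split; first exact: Gext_sub.
    move=> Asub; apply: (hy' (sup [set r | exists d v, A (d, v) /\ r = v - p (d - y)])).
    by apply: Asub; apply: Gext_new.
  split; last exact: Gext_lin.
  by right => z /G0A; apply: Gext_sub.
pose L y := xget 0 [set v | A (y, v)].
have AL : forall y, A (y, L y) by move=> y; exact: (xgetPex 0 (Atot y)).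
have Luniq : forall y v, A (y, v) -> L y = v.
  by move=> y v Av; case: lA => Gf _ _; exact: Gf (AL y) Av.
exists L; split.
- move=> a x y; apply: Luniq; case: lA => _ Gc _; exact: Gc.
- by move=> x; case: lA => _ _; apply; exact: AL.
- by apply: Luniq; apply: G0A; exists 1; rewrite scale1r mul1r.
Qed.

End HahnBanach.

Section Sep.
Context {R : realType} {Y : lmodType R}.
Variable K : set Y.
Hypothesis Kconv : forall x y (l : R), K x -> K y -> 0 <= l <= 1 -> K (l *: x + (1 - l) *: y).
Hypothesis Kopen : forall k y, K k -> exists2 d : R, 0 < d & K (k + d *: y).
Hypothesis K0 : ~ K 0.
Variable k0 : Y.
Hypothesis Kk0 : K k0.

Let C : set Y := [set y | K (y + k0)].
Let Gs y := [set t : R | 0 < t /\ C (t^-1 *: y)].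
Let p y := inf (Gs y).

Let Cconv x y (l : R) : C x -> C y -> 0 <= l <= 1 -> C (l *: x + (1 - l) *: y).
Proof.
move=> Cx Cy l01; have := Kconv Cx Cy l01.
have -> : l *: (x + k0) + (1 - l) *: (y + k0) = l *: x + (1 - l) *: y + k0.
  by rewrite !scalerDr addrACA -scalerDl (addrC l) subrK scale1r.
by [].
Qed.

Let C0 : C 0. Proof. by rewrite /C /= add0r. Qed.

Let Gs_ne y : Gs y !=set0.
Proof.
have [d d0 Kd] := Kopen y Kk0; exists d^-1; split; first by rewrite invr_gt0.
by rewrite /C /= invrK addrC.
Qed.

Let Gs_lb y : has_lbound (Gs y).
Proof. by exists 0 => t [/ltW]. Qed.

Let p_ge0 y : 0 <= p y.
Proof. by apply: lb_le_inf => // t [/ltW]. Qed.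

Let p_le y t : Gs y t -> p y <= t.
Proof. by move=> Gt; apply: ge_inf => //; exact: Gs_lb. Qed.

Let p_lt1 y : p y < 1 -> C y.
Proof.
move=> /(inf_lt (Gs_ne y)) [t [t0 Ct] t1].
have := Cconv Ct C0 (l := t); rewrite scaler0 addr0 scalerA mulfV ?gt_eqF // scale1r.
by apply; rewrite (ltW t0) (ltW t1).
Qed.

Let p_scale_le (a : R) y : 0 < a -> p (a *: y) <= a * p y.
Proof.
move=> a0; rewrite -ler_pdivrMl //; apply: lb_le_inf => // t [t0 Ct].
rewrite ler_pdivrMl //; apply: p_le; split; first by rewrite mulr_gt0.
by rewrite scalerA invfM mulrAC mulVf ?gt_eqF // mul1r.
Qed.

Let p_scale (a : R) y : 0 < a -> p (a *: y) = a * p y.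
Proof.
move=> a0; apply/eqP; rewrite eq_le p_scale_le //=.
have ai : 0 < a^-1 by rewrite invr_gt0.
have := @p_scale_le a^-1 (a *: y) ai.
rewrite scalerA mulVf ?gt_eqF // scale1r.
by rewrite -ler_pdivrMl // invrK.
Qed.

Let p_add x y : p (x + y) <= p x + p y.
Proof.
have key : forall s t, Gs x s -> Gs y t -> p (x + y) <= s + t.
  move=> s t [s0 Cs] [t0 Ct]; apply: p_le; split; first by rewrite addr_gt0.
  have st0 : 0 < s + t by rewrite addr_gt0.
  have st0' : s + t != 0 by rewrite gt_eqF.
  have s0' : s != 0 by rewrite gt_eqF.
  have t0' : t != 0 by rewrite gt_eqF.
  have := Cconv Cs Ct (l := s / (s + t)).
  have -> : 1 - s / (s + t) = t / (s + t).
    by apply/eqP; rewrite subr_eq -mulrDl [t + s]addrC divff.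
  rewrite !scalerA mulrAC mulfV // mul1r.
  rewrite mulrAC mulfV // mul1r -scalerDr; apply.
  apply/andP; split; first by rewrite divr_ge0 // ltW.
  by rewrite ler_pdivrMr // mul1r lerDl ltW.
have h1 : forall t, Gs y t -> p (x + y) - t <= p x.
  move=> t Gt; apply: lb_le_inf => // s Gsx; rewrite lerBlDr; exact: key.
rewrite -lerBlDl; apply: lb_le_inf => // t Gt; rewrite lerBlDl.
by have := h1 t Gt; rewrite lerBlDr.
Qed.

Theorem separation : exists L : Y -> R,
  (forall a x y, L (a *: x + y) = a * L x + L y) /\ forall k, K k -> L k < 0.
Proof.
have [L [Llin Lp Ly0]] := hahn_banach p_add p_scale (- k0).
have L0 : L 0 = 0.
  have := Llin 1 0 0; rewrite scale1r addr0 mul1r => h; lra.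
have LN x : L (- x) = - L x by have := Llin (-1) x 0; rewrite addr0 L0 addr0 scaleN1r mulN1r.
have LD x y : L (x + y) = L x + L y by have := Llin 1 x y; rewrite scale1r mul1r.
have pk0 : 1 <= p (- k0).
  rewrite leNgt; apply/negP => /p_lt1; rewrite /C /= addNr; exact: K0.
exists L; split => // k Kk.
have [d d0 Kd] := Kopen (k - k0) Kk.
have : p (k - k0) <= (1 + d)^-1.
  apply: p_le; split; first by rewrite invr_gt0 addr_gt0.
  rewrite invrK /C /=.
  by have -> : (1 + d) *: (k - k0) + k0 = k + d *: (k - k0) by rewrite scalerDl scale1r addrAC subrK.
have lt1 : (1 + d)^-1 < 1 by rewrite invf_lt1 ?ltrDl // addr_gt0.
have := Lp (k - k0); rewrite LD LN => h1 h2.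
have := LN k0; rewrite Ly0 => h3; lra.
Qed.

End Sep.

Local Open Scope ereal_scope.
Local Open Scope ring_scope.

Section Basic.
Context {R : realType} {X : tvsType R}.
Implicit Types (z w u : X * (X -> R)) (S : set (X * (X -> R))).

Lemma dual_lin (f : X -> R) : dual_space f -> forall a x y, f (a *: x + y) = a * f x + f y.
Proof. by case. Qed.

Lemma dual0 (f : X -> R) : dual_space f -> f 0 = 0.
Proof.
move=> /dual_lin fl; have := fl 1 0 0; rewrite scale1r addr0 mul1r => h.
lra.
Qed.

Lemma dualD (f : X -> R) x y : dual_space f -> f (x + y) = f x + f y.
Proof. by move=> /dual_lin fl; have := fl 1 x y; rewrite scale1r mul1r. Qed.

Lemma dualZ (f : X -> R) a x : dual_space f -> f (a *: x) = a * f x.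
Proof. by move=> df; have := dual_lin df a x 0; rewrite addr0 dual0 // addr0. Qed.

Lemma dualN (f : X -> R) x : dual_space f -> f (- x) = - f x.
Proof. by move=> df; rewrite -scaleN1r dualZ // mulN1r. Qed.

Lemma dualB (f : X -> R) x y : dual_space f -> f (x - y) = f x - f y.
Proof. by move=> df; rewrite dualD // dualN. Qed.

Lemma dual_comb (f g : X -> R) (a b : R) : dual_space f -> dual_space g ->
  dual_space (fun x => a * f x + b * g x).
Proof.
move=> [fl fc] [gl gc]; split.
  by move=> c x y; rewrite fl gl; ring.
move=> x0; apply: cvgD; apply: cvgMl_tmp; [exact: fc|exact: gc].
Qed.

Lemma dual_scale (f : X -> R) (a : R) : dual_space f -> dual_space (fun x => a * f x).
Proof.
move=> df; have := dual_comb a 0 df df.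
by congr dual_space; apply: funext => x; rewrite mul0r addr0.
Qed.

Lemma Zsp_comb (l : R) z w : Zsp z -> Zsp w -> Zsp (zcomb l z w).
Proof. exact: dual_comb. Qed.

Definition term z u : R := u.2 z.1 + z.2 u.1 - u.2 u.1.

Lemma fitz_ub S z u : S u -> ((term z u)%:E <= fitzpatrick S z)%E.
Proof. by move=> Su; apply: ereal_sup_ubound; exists u. Qed.

Lemma fitz_le S z (r : R) : (forall u, S u -> term z u <= r) ->
  (fitzpatrick S z <= r%:E)%E.
Proof. by move=> h; apply: ge_ereal_sup => _ [u Su <-]; rewrite lee_fin h. Qed.

Lemma fitz_gt S z (a : R) : (a%:E < fitzpatrick S z)%E -> exists2 u, S u & a < term z u.
Proof. by move=> /ereal_sup_gt [_ [u Su <-]]; rewrite lte_fin; exists u. Qed.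

Lemma fitz_leE S z (r : R) : (fitzpatrick S z <= r%:E)%E -> forall u, S u -> term z u <= r.
Proof. by move=> h u Su; rewrite -lee_fin; apply: le_trans h; exact: fitz_ub. Qed.

Lemma term_mon z u : Zsp z -> Zsp u ->
  term z u = coupling z - (z.2 (z.1 - u.1) - u.2 (z.1 - u.1)).
Proof. by move=> dz du; rewrite /term /coupling !dualB //; ring. Qed.

Lemma mon_termE z u : Zsp z -> Zsp u -> mon_related z u <-> term z u <= coupling z.
Proof.
move=> dz du; rewrite term_mon // /mon_related; split => h.
  by rewrite lerBlDr lerDl.
by move: h; rewrite lerBlDr lerDl.
Qed.

Lemma mon_sym z w : Zsp z -> Zsp w -> mon_related z w -> mon_related w z.
Proof.
move=> dz dw; rewrite /mon_related !dualB // => h.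
by apply: le_trans h _; rewrite le_eqVlt; apply/orP; left; apply/eqP; ring.
Qed.

Lemma term_self z : term z z = coupling z.
Proof. by rewrite /term /coupling addrK. Qed.

Lemma fitz_lec S z : S `<=` Zsp -> Zsp z ->
  (fitzpatrick S z <= (coupling z)%:E)%E <-> forall u, S u -> mon_related z u.
Proof.
move=> SZ dz; split.
  by move=> h u Su; apply/mon_termE => //; [exact: SZ|exact: fitz_leE h u Su].
move=> h; apply: fitz_le => u Su; apply/mon_termE => //; [exact: SZ|exact: h].
Qed.

Lemma term_comb (l : R) z w u : Zsp u ->
  term (zcomb l z w) u = l * term z u + (1 - l) * term w u.
Proof. by move=> du; rewrite /term /= dualD // !dualZ //; ring. Qed.

Lemma fitz_convex S : S `<=` Zsp -> convex_on_Z (fitzpatrick S).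
Proof.
move=> SZ z w r s l dz dw hz hw /andP [l0 l1].
apply: fitz_le => u Su; rewrite term_comb; last exact: SZ.
have h1 := fitz_leE hz Su; have h2 := fitz_leE hw Su.
have l1' : 0 <= 1 - l by rewrite subr_ge0.
by apply: lerD; apply: ler_wpM2l.
Qed.

Lemma coupling_comb (l : R) z w : Zsp z -> Zsp w ->
  coupling (zcomb l z w) = l * l * coupling z + (1 - l) * (1 - l) * coupling w
     + l * (1 - l) * (z.2 w.1 + w.2 z.1).
Proof. by move=> dz dw; rewrite /coupling /= !dualD // !dualZ //; ring. Qed.

Lemma mid_mon (h : X * (X -> R) -> \bar R) z w : convex_on_Z h -> Zsp z -> Zsp w ->
  (h z <= (coupling z)%:E)%E -> (h w <= (coupling w)%:E)%E ->
  ((coupling (zcomb (2^-1) z w))%:E <= h (zcomb (2^-1) z w))%E -> mon_related z w.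
Proof.
move=> hc dz dw hz hw hm.
have : (h (zcomb (2^-1) z w) <= (2^-1 * coupling z + (1 - 2^-1) * coupling w)%:E)%E.
  apply: hc => //; apply/andP; split; first by rewrite invr_ge0 ler0n.
  by rewrite invf_le1 ?ler1n // ltr0n.
move=> /(le_trans hm); rewrite lee_fin coupling_comb // => h2.
rewrite /mon_related !dualB //.
have e : 1 - (2:R)^-1 = 2^-1 by field.
rewrite e in h2.
have i2 : (2:R)^-1 * 2^-1 = 4^-1 by field.
rewrite i2 in h2.
have : 0 <= 4^-1 * ((coupling z + coupling w) - (z.2 w.1 + w.2 z.1)).
  have -> : (4:R)^-1 * ((coupling z + coupling w) - (z.2 w.1 + w.2 z.1)) =
    2^-1 * coupling z + 2^-1 * coupling w -
    (4^-1 * coupling z + 4^-1 * coupling w + 4^-1 * (z.2 w.1 + w.2 z.1)) by field.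
  by rewrite subr_ge0.
rewrite pmulr_rge0 ?invr_gt0 ?ltr0n // /coupling => h3.
by apply: le_trans h3 _; rewrite le_eqVlt; apply/orP; left; apply/eqP; ring.
Qed.

End Basic.

Local Open Scope ereal_scope.
Local Open Scope ring_scope.

Section Basic2.
Context {R : realType} {X : tvsType R}.
Implicit Types (z w u : X * (X -> R)) (S : set (X * (X -> R))).

Lemma fitz_lsc S : S `<=` Zsp -> tw_lsc (fitzpatrick S).
Proof.
move=> SZ a z dz /= /fitz_gt [u Su au].
have du := SZ _ Su.
set d := term z u - a.
have d0 : 0 < d / 2 by rewrite divr_gt0 // subr_gt0.
have := (du.2 z.1); move/cvgrPdist_lt => /(_ _ d0) Nz.
exists [set t | `|u.2 z.1 - u.2 t| < d / 2]; split; first exact: Nz.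
exists [:: u.1], (d / 2); split => // x ys Nx dys /(_ u.1 (mem_head _ _)) hy.
rewrite /= in Nx.
apply: lt_le_trans (fitz_ub _ Su); rewrite lte_fin /term /=.
move: Nx hy; rewrite /d /term.
rewrite !ltr_norml => /andP [h1 h1'] /andP [h2 h2'].
lra.
Qed.

Definition cand S (h : X * (X -> R) -> \bar R) := convex_on_Z h /\ tw_lsc h /\
  forall w, Zsp w -> (h w <= (coupling w)%:E + indic_graph S w)%E.

Lemma psi_ge S h z : cand S h -> (h z <= psi_hull S z)%E.
Proof. by move=> ch; apply: ereal_sup_ubound; exists h. Qed.

Lemma psi_le S z (r : \bar R) : (forall h, cand S h -> (h z <= r)%E) -> (psi_hull S z <= r)%E.
Proof. by move=> H; apply: ge_ereal_sup => _ [h ch <-]; exact: H. Qed.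

Lemma cand_onS S h w : cand S h -> Zsp w -> S w -> (h w <= (coupling w)%:E)%E.
Proof.
move=> [_ [_ hc]] dw Sw; have := hc w dw.
by rewrite /indic_graph asboolT // adde0.
Qed.

Lemma candI S h : convex_on_Z h -> tw_lsc h ->
  (forall w, Zsp w -> S w -> (h w <= (coupling w)%:E)%E) -> cand S h.
Proof.
move=> hc hl hS; split => //; split => // w dw; rewrite /indic_graph.
case: asboolP => [Sw|_]; first by rewrite adde0; exact: hS.
by rewrite addey // leey.
Qed.

Lemma fitz_cand T' S : T' `<=` Zsp -> monotone_op T' -> S `<=` T' -> cand S (fitzpatrick T').
Proof.
move=> TZ mT ST; apply: candI; [exact: fitz_convex|exact: fitz_lsc|].
move=> w dw Sw; apply/fitz_lec => // u Tu; apply: mT => //; exact: ST.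
Qed.

Lemma psi_convex S : convex_on_Z (psi_hull S).
Proof.
move=> z w r s l dz dw hz hw l01; apply: psi_le => h ch.
have [hc _] := ch; apply: hc => //.
  exact: le_trans (psi_ge _ ch) hz.
exact: le_trans (psi_ge _ ch) hw.
Qed.

Lemma psi_lsc S : tw_lsc (psi_hull S).
Proof.
move=> a z dz /= /ereal_sup_gt [_ [h ch <-]] ah.
have [_ [hl _]] := ch.
have [N [Nz [F [e [e0 H]]]]] := hl a z dz ah.
exists N; split => //; exists F, e; split => // x ys Nx dys hF.
apply: lt_le_trans (H x ys Nx dys hF) _; exact: psi_ge.
Qed.

End Basic2.

Local Open Scope ring_scope.

Section Key1.
Context {R : realType} {X : tvsType R}.

Lemma lc_nbhs (x : X) (N : set X) : nbhs x N ->
  exists N' : set X, [/\ open N', N' x, N' `<=` N & convex_set N'].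
Proof.
move=> Nx.
have [B Bc [Bo Bb]] := @locally_convex R X.
have := Bb x N Nx.
move=> [U [BU Ux] UN].
exists U; split => //; [exact: Bo | apply: Bc; by rewrite inE].
Qed.

Lemma nbhs_shift0 (N : set X) (n : X) : nbhs n N -> nbhs (0 : X) [set v | N (n + v)].
Proof.
move=> Nn; have := @nbhsB R X N n (- n); rewrite addNr => /(_ Nn).
apply: filterS => v [w Nw <-]; by rewrite /= addNKr.
Qed.

Lemma open_seg (N : set X) (n y : X) : open N -> N n ->
  exists2 d : R, 0 < d & forall t : R, 0 <= t <= d -> N (n + t *: y).
Proof.
move=> oN Nn.
have U0 := nbhs_shift0 (open_nbhs_nbhs (conj oN Nn)).
have /= := scale_continuous (0, y) [set v | N (n + v)].
rewrite scale0r => /(_ U0) [] /= B [B1 B2] BU.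
have [e /= e0 He] := (nbhs_ballP _ _).1 B1.
exists (e / 2); first by rewrite divr_gt0.
move=> t /andP [t0 te]; apply: (BU (t, y)); split => //=; last exact: nbhs_singleton.
apply: He; rewrite /ball /= sub0r normrN ger0_norm //.
by apply: le_lt_trans te _; rewrite ltr_pdivrMr // ltr_pMr // ltr1n.
Qed.

Lemma lin_cont (f : X -> R) (x : X) (N : set X) (M : R) :
  (forall a u v, f (a *: u + v) = a * f u + f v) -> nbhs x N ->
  (forall y, N y -> f y < M) -> dual_space f.
Proof.
move=> fl Nx fM; split => // x0.
have f0 : f 0 = 0 by have := fl 1 0 0; rewrite scale1r addr0 mul1r => h; lra.
have fD u v : f (u + v) = f u + f v by have := fl 1 u v; rewrite scale1r mul1r.
have fZ a u : f (a *: u) = a * f u by have := fl a u 0; rewrite addr0 f0 addr0.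
have fN u : f (- u) = - f u by rewrite -scaleN1r fZ mulN1r.
set m := M - f x.
have m0 : 0 < m by rewrite subr_gt0; apply: fM; exact: nbhs_singleton.
have A0 := nbhs_shift0 Nx.
have W0 : nbhs (0 : X) [set w | N (x + w) /\ N (x - w)].
  have A1 := @nbhs0N R X _ A0.
  have A2 := filterI A0 A1.
  have A3 := A2 (nbhs_filter _).
  apply: (@filterS X (nbhs (0:X)) (nbhs_filter 0) _ _ _ A3) => w [h1 [v h2 vw]].
  by split => //; rewrite -vw opprK.
have Wb w : N (x + w) /\ N (x - w) -> `|f w| < m.
  move=> [h1 h2]; have := fM _ h1; have := fM _ h2.
  rewrite fD fD fN /m ltr_norml => a b; apply/andP; split; lra.
apply/cvgrPdist_lt => eps eps0.
set k := m / eps.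
have k0 : 0 < k by rewrite divr_gt0.
have k0' : k^-1 != 0 by rewrite invr_eq0 gt_eqF.
have := @nbhs0Z R X _ _ k0' W0 => W1.
have := @nbhsB R X _ 0 x0 W1; rewrite addr0.
apply: filterS => _ [_ [w Ww <-] <-].
rewrite fD fZ opprD addNKr normrN normrM ger0_norm ?invr_ge0 ?ltW //.
rewrite /k invf_div mulrAC ltr_pdivrMr // ltr_pM2l //.
exact: Wb.
Qed.

Lemma repr_eval (F : seq X) : forall (l : (X -> R^o) -> R),
  (forall a g g', l (a *: g + g') = a * l g + l g') ->
  (forall g, (forall u, u \in F -> g u = 0) -> l g = 0) ->
  exists a : X, forall g : X -> R, dual_space g -> l g = g a.
Proof.
elim: F => [|u F IH] l ll lz.
  exists 0 => g dg; rewrite dual0 //; apply: lz => u; by rewrite in_nil.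
pose ind : X -> R^o := fun v => if v == u then 1 else 0.
pose l' g := l g - l ind * g u.
have l'l a g g' : l' (a *: g + g') = a * l' g + l' g'.
  rewrite /l' ll; have -> : (a *: g + g') u = a * g u + g' u by []; ring.
have l'z g : (forall v, v \in F -> g v = 0) -> l' g = 0.
  move=> gF.
  have : l (g - g u *: ind) = 0.
    have gv v : (g - g u *: ind) v = g v - g u * ind v by [].
    apply: lz => v; rewrite in_cons gv => /orP [/eqP ->|vF].
      by rewrite /ind eqxx mulr1 subrr.
    rewrite gF // /ind; case: eqP => [vu|_]; last by rewrite mulr0 subrr.
    by rewrite -vu gF // mul0r subrr.
  have := ll (- g u) ind g; rewrite addrC -scaleNr => ->.
  by rewrite /l' mulNr => h; lra.
have [a Ha] := IH l' l'l l'z.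
exists (a + l ind *: u) => g dg.
by rewrite dualD // dualZ // -(Ha g dg) /l'; ring.
Qed.

Lemma small_common (F : seq X) (P : R -> X -> Prop) :
  (forall u, u \in F -> exists2 d : R, 0 < d & forall t, 0 <= t <= d -> P t u) ->
  exists2 d : R, 0 < d & forall t, 0 <= t <= d -> forall u, u \in F -> P t u.
Proof.
elim: F => [|v F IH] H; first by exists 1 => // t _ u; rewrite in_nil.
have [d1 d10 H1] := H v (mem_head _ _).
have [d2 d20 H2] : exists2 d : R, 0 < d & forall t, 0 <= t <= d -> forall u, u \in F -> P t u.
  by apply: IH => u uF; apply: H; rewrite in_cons uF orbT.
exists (Num.min d1 d2); first by rewrite lt_min d10 d20.
move=> t /andP [t0]; rewrite le_min => /andP [td1 td2] u; rewrite in_cons => /orP [/eqP ->|uF].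
  by apply: H1; rewrite t0 td1.
by apply: H2 => //; rewrite t0 td2.
Qed.

Lemma small_lt (c a e : R) : c < e -> exists2 d : R, 0 < d & forall t, 0 <= t <= d -> c + t * a < e.
Proof.
move=> ce; exists ((e - c) / (`|a| + 1)).
  by rewrite divr_gt0 // ?subr_gt0 // ltr_pwDr // normr_ge0.
move=> t /andP [t0 td].
have h1 : t * a <= t * `|a| by rewrite ler_wpM2l // ler_norm.
have h2 : t * `|a| < e - c.
  have a1 : 0 < `|a| + 1 by rewrite ltr_pwDr // normr_ge0.
  have : t * (`|a| + 1) <= e - c by rewrite -ler_pdivlMr.
  have : 0 <= t by [].
  nra.
lra.
Qed.

End Key1.

Local Open Scope ring_scope.

Section Key2.
Context {R : realType} {X : tvsType R}.
Implicit Types (z w u : X * (X -> R)) (S : set (X * (X -> R))).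

Lemma nsz S (V : set X) z w (K : R) :
  S `<=` Zsp -> algebraically_open V ->
  (forall y, Zsp y -> V y.1 -> ((coupling y)%:E <= fitzpatrick S y)%E) ->
  Zsp z -> V z.1 -> (forall u, S u -> term z u <= coupling z) ->
  Zsp w -> (forall u, S u -> term w u <= K) ->
  z.2 w.1 + w.2 z.1 - coupling z <= K.
Proof.
move=> SZ aoV NI dz Vz hz dw hw.
rewrite leNgt; apply/negP => KR.
set Rw := z.2 w.1 + w.2 z.1 - coupling z in KR.
have [d0' d00 Hd0] := aoV _ Vz (w.1 - z.1).
set d := Num.min d0' 1.
have d0 : 0 < d by rewrite lt_min d00 ltr01.
have Hd : forall t, 0 <= t <= d -> V (z.1 + t *: (w.1 - z.1)).
  move=> t /andP [t0 td]; apply: Hd0; rewrite t0 /=; apply: le_trans td _.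
  by rewrite ge_min lexx.
have d1 : d <= 1 by rewrite ge_min lexx orbT.
set q := w.2 w.1 - w.2 z.1 - z.2 w.1 + z.2 z.1.
set t := Num.min d ((Rw - K) / (2 * (`|q| + 1))).
have q1 : 0 < `|q| + 1 by rewrite ltr_pwDr // normr_ge0.
have t0 : 0 < t by rewrite lt_min d0 divr_gt0 // ?subr_gt0 // mulr_gt0.
have td : t <= d by rewrite ge_min lexx.
have t1 : t <= 1 by apply: le_trans td d1.
have tq : t * (2 * (`|q| + 1)) <= Rw - K.
  by rewrite -ler_pdivlMr ?mulr_gt0 // ge_min lexx orbT.
set zt := zcomb (1 - t) z w.
have dzt : Zsp zt by exact: Zsp_comb.
have Vzt : V zt.1.
  have -> : zt.1 = z.1 + t *: (w.1 - z.1).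
    rewrite /zt /= scalerBl scale1r scalerBr.
    have -> : 1 - (1 - t) = t by ring.
    by rewrite addrAC addrA.
  by apply: Hd; rewrite (ltW t0) td.
have tt : 1 - (1 - t) = t by ring.
have H1 : forall u, S u -> term zt u <= (1 - t) * coupling z + t * K.
  move=> u Su; rewrite term_comb; last exact: SZ.
  rewrite tt; apply: lerD.
    by apply: ler_wpM2l; [rewrite subr_ge0|exact: hz].
  by apply: ler_wpM2l; [exact: ltW|exact: hw].
have := le_trans (NI zt dzt Vzt) (fitz_le H1).
rewrite lee_fin /zt coupling_comb // tt => h.
have h2 : t * ((Rw - K) + t * q) <= 0.
  rewrite /Rw /q /coupling in h *; lra.
have h3 : (Rw - K) + t * q <= 0.
  by move: h2; rewrite pmulr_rle0.
have h4 : - (t * `|q|) <= t * q.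
  by rewrite -mulrN ler_wpM2l ?(ltW t0) // (lerNnormlW (lexx _)).
lra.
Qed.
End Key2.

Local Open Scope ring_scope.

Section Key3.
Context {R : realType} {X : tvsType R}.
Implicit Types (z w u : X * (X -> R)) (S : set (X * (X -> R))).

Lemma convex_setP (A : set X) : convex_set A ->
  forall x y (l : R), A x -> A y -> 0 <= l <= 1 -> A (l *: x + (1 - l) *: y).
Proof.
move=> cA x y l Ax Ay /andP [l0 l1].
have := cA x y (Itv01 l0 l1); rewrite !inE => /(_ Ax Ay).
by [].
Qed.

Lemma small_abs (c a e : R) : `|c| < e ->
  exists2 d : R, 0 < d & forall t, 0 <= t <= d -> `|c + t * a| < e.
Proof.
rewrite ltr_norml => /andP [h1 h2].
have [d1 d10 H1] := small_lt a h2.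
have [d2 d20 H2] : exists2 d : R, 0 < d & forall t, 0 <= t <= d -> - c + t * - a < e.
  by apply: small_lt; lra.
exists (Num.min d1 d2); first by rewrite lt_min d10 d20.
move=> t /andP [t0]; rewrite le_min => /andP [td1 td2].
have := H1 t; rewrite t0 td1 => /(_ isT) k1.
have := H2 t; rewrite t0 td2 => /(_ isT) k2.
rewrite ltr_norml; apply/andP; split; lra.
Qed.

Definition Yt := (X * ((X -> R^o) * R^o))%type.


Lemma key_psi S (V : set X) z h :
  S `<=` Zsp -> S !=set0 -> algebraically_open V ->
  (forall y, Zsp y -> V y.1 -> ((coupling y)%:E <= fitzpatrick S y)%E) ->
  Zsp z -> V z.1 -> (forall u, S u -> term z u <= coupling z) ->
  cand S h -> (h z <= (coupling z)%:E)%E.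
Proof.
move=> SZ [s0 Ss0] aoV NI dz Vz hz ch.
have [hc [hl hS]] := ch.
rewrite leNgt; apply/negP => czh.
have [r [cr rh]] : exists r : R, coupling z < r /\ (r%:E < h z)%E.
  move: czh; case: (h z) => [a| |] //=; rewrite ?lte_fin => ca.
  - by exists ((coupling z + a) / 2); split; [|rewrite lte_fin]; lra.
  - by exists (coupling z + 1); split; [lra|rewrite ltry].
have [N [Nx [F [e [e0 HN]]]]] := hl r z dz rh.
have [N' [oN' N'x N'N cN']] := lc_nbhs Nx.
pose B : set Yt := [set b | [/\ N' b.1, (forall v : X, v \in F -> `|b.2.1 v - z.2 v| < e) & b.2.2 < r]].
pose E : set Yt := [set a | Zsp (a.1, a.2.1) /\ (h (a.1, a.2.1) <= a.2.2%:E)%E].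
pose K : set Yt := [set k | exists b a, [/\ B b, E a & k = b - a]].
have Bopen : forall b y, B b -> exists2 d : R, 0 < d & B (b + d *: y).
  move=> b y [b1 b2 b3].
  have [d1 d10 H1] := open_seg y.1 oN' b1.
  have [d2 d20 H2] := @small_common _ _ F (fun t (v : X) => `|b.2.1 v - z.2 v + t * y.2.1 v| < e)
    (fun (v : X) vF => small_abs (y.2.1 v) (b2 v vF)).
  have [d3 d30 H3] := small_lt y.2.2 b3.
  exists (Num.min d1 (Num.min d2 d3)); first by rewrite !lt_min d10 d20 d30.
  set d := Num.min d1 (Num.min d2 d3).
  have dd1 : 0 <= d <= d1 by rewrite ltW ?lt_min ?d10 ?d20 ?d30 //= ge_min lexx.
  have dd2 : 0 <= d <= d2 by rewrite ltW ?lt_min ?d10 ?d20 ?d30 //= !ge_min lexx orbT.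
  have dd3 : 0 <= d <= d3 by rewrite ltW ?lt_min ?d10 ?d20 ?d30 //= !ge_min lexx !orbT.
  split => /=.
  - exact: H1.
  - move=> v vF; have := H2 d dd2 v vF.
    by have -> : b.2.1 v - z.2 v + d * y.2.1 v = b.2.1 v + d * y.2.1 v - z.2 v by ring.
  - exact: H3.
have Bconv : forall b b' (l : R), B b -> B b' -> 0 <= l <= 1 -> B (l *: b + (1 - l) *: b').
  move=> b b' l [b1 b2 b3] [b1' b2' b3'] /andP [l0 l1].
  have l1' : 0 <= 1 - l by rewrite subr_ge0.
  split => /=.
  - by apply: convex_setP => //; rewrite l0 l1.
  - move=> v vF; have := b2 v vF; have := b2' v vF.
    have -> : l * b.2.1 v + (1 - l) * b'.2.1 v - z.2 v =
      l * (b.2.1 v - z.2 v) + (1 - l) * (b'.2.1 v - z.2 v) by ring.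
    move=> k1 k2; apply: le_lt_trans (ler_normD _ _) _.
    rewrite !normrM (ger0_norm l0) (ger0_norm l1').
    set A := `|b.2.1 v - z.2 v|; set A' := `|b'.2.1 v - z.2 v|.
    have hA : l * A <= l * Num.max A A' by rewrite ler_wpM2l // le_max lexx.
    have hA' : (1 - l) * A' <= (1 - l) * Num.max A A' by rewrite ler_wpM2l // le_max lexx orbT.
    have hm : Num.max A A' < e by rewrite gt_max k1 k2.
    lra.
  - set A := b.2.2; set A' := b'.2.2.
    have hA : l * A <= l * Num.max A A' by rewrite ler_wpM2l // le_max lexx.
    have hA' : (1 - l) * A' <= (1 - l) * Num.max A A' by rewrite ler_wpM2l // le_max lexx orbT.
    have hm : Num.max A A' < r by rewrite gt_max b3 b3'.
    change (l * A + (1 - l) * A' < r); lra.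
have Econv : forall a a' (l : R), E a -> E a' -> 0 <= l <= 1 -> E (l *: a + (1 - l) *: a').
  move=> a a' l [a1 a2] [a1' a2'] l01.
  change (Zsp (zcomb l (a.1, a.2.1) (a'.1, a'.2.1)) /\
    (h (zcomb l (a.1, a.2.1) (a'.1, a'.2.1)) <= (l * a.2.2 + (1 - l) * a'.2.2)%:E)%E).
  split; first exact: Zsp_comb.
  exact: hc.
have Kconv : forall k k' (l : R), K k -> K k' -> 0 <= l <= 1 -> K (l *: k + (1 - l) *: k').
  move=> k k' l [b [a [Bb Ea ->]]] [b' [a' [Bb' Ea' ->]]] l01.
  exists (l *: b + (1 - l) *: b'), (l *: a + (1 - l) *: a'); split.
  - exact: Bconv.
  - exact: Econv.
  - by rewrite !scalerBr addrACA -opprD.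
have Kopen : forall k y, K k -> exists2 d : R, 0 < d & K (k + d *: y).
  move=> k y [b [a [Bb Ea ->]]].
  have [d d0 Bd] := Bopen b y Bb.
  exists d => //; exists (b + d *: y), a; split => //.
  by rewrite addrAC.
have K0 : ~ K 0.
  move=> [b [a [Bb Ea /esym/eqP]]]; rewrite subr_eq0 => /eqP ba; subst b.
  case: Bb => a1 a2 a3; case: Ea => da ha.
  have := HN a.1 a.2.1 (N'N _ a1) da a2; rewrite /= => ra.
  have := lt_le_trans ra ha; rewrite lte_fin => k.
  by have := lt_trans k a3; rewrite ltxx.
pose b0 : Yt := (z.1, (z.2, r - 1)).
pose a0 : Yt := (s0.1, (s0.2, coupling s0)).
have Bb0 : B b0.
  split => //=; last by lra.
  by move=> v _; rewrite subrr normr0.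
have aE : forall u, S u -> E (u.1, (u.2, coupling u)).
  move=> u Su; have du := SZ _ Su; split; first by case: u Su du.
  by case: u Su du => u1 u2 Su du; apply: (cand_onS ch).
have Ea0 : E a0 by apply: aE.
have Kk0 : K (b0 - a0) by exists b0, a0.
have [L [Llin LK]] := separation Kconv Kopen K0 Kk0.
have L0 : L 0 = 0.
  have := Llin 1 0 0; rewrite scale1r addr0 mul1r => hh; lra.
have LD : forall x y, L (x + y) = L x + L y.
  by move=> x y; have := Llin 1 x y; rewrite scale1r mul1r.
have LZ : forall a x, L (a *: x) = a * L x.
  by move=> a x; have := Llin a x 0; rewrite addr0 L0 addr0.
have LN : forall x, L (- x) = - L x by move=> x; rewrite -scaleN1r LZ mulN1r.
have LB : forall b a, B b -> E a -> L b < L a.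
  move=> b a Bb Ea; have := LK (b - a) (ex_intro _ b (ex_intro _ a (And3 Bb Ea erefl))).
  rewrite LD LN => hh; lra.
pose f (y : X) := L (y, (0, 0)).
pose l (g : X -> R^o) := L (0, (g, 0)).
pose ga := L (0, (0, 1)).
have Ldec : forall y g t, L (y, (g, t)) = f y + l g + t * ga.
  move=> y g t.
  have -> : (y, (g, t)) = (y, (0, 0)) + (0, (g, 0)) + t *: (0, (0, 1)) :> Yt.
    congr (_, (_, _)) => /=; rewrite ?scaler0 ?addr0 ?add0r //.
    by rewrite /GRing.scale /= mulr1.
  by rewrite !LD LZ.
have flin : forall a (y1 y2 : X), f (a *: y1 + y2) = a * f y1 + f y2.
  move=> a y1 y2; rewrite /f -LZ -LD; congr L.
  by congr (_, (_, _)) => /=; rewrite ?scaler0 ?addr0.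
have llin : forall a g g', l (a *: g + g') = a * l g + l g'.
  move=> a g g'; rewrite /l -LZ -LD; congr L.
  by congr (_, (_, _)) => /=; rewrite ?scaler0 ?addr0.
have fdual : dual_space f.
  apply: (@lin_cont _ _ f z.1 N' (L a0 - l z.2 - (r - 1) * ga)) => //.
    exact: open_nbhs_nbhs.
  move=> y Ny.
  have : B (y, (z.2, r - 1)) by split => //=; [move=> v _; rewrite subrr normr0|lra].
  move=> /LB /(_ Ea0); rewrite Ldec => hh; lra.
have lz : forall g, (forall v, v \in F -> g v = 0) -> l g = 0.
  move=> g gF; apply: contrapT => lg0.
  set M' := L a0 - f z.1 - l z.2 - (r - 1) * ga.
  set lam := (`|M'| + 1) / l g.
  have : B (z.1, (lam *: g + z.2, r - 1)).
    split => //=; last by lra.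
    move=> v vF; have -> : (lam *: g + z.2) v = lam * g v + z.2 v by [].
    by rewrite gF // mulr0 add0r subrr normr0.
  move=> /LB /(_ Ea0); rewrite Ldec llin.
  have -> : lam * l g = `|M'| + 1.
    by rewrite /lam -mulrA mulVf ?mulr1 //; apply/eqP.
  have := ler_norm M'; rewrite /M' => hh1 hh2; clear -hh1 hh2; lra.
have [a Ha] := @repr_eval _ _ F l llin lz.
have Bz : forall t, t < r -> B (z.1, (z.2, t)).
  by move=> t tr; split => //= v _; rewrite subrr normr0.
have ga0 : 0 <= ga.
  rewrite leNgt; apply/negP => gn.
  set M'' := L a0 - f z.1 - l z.2.
  set t := Num.min (r - 1) ((`|M''| + 1) / ga).
  have tr1 : t <= r - 1 by rewrite ge_min lexx.
  have tr : t < r by apply: le_lt_trans tr1 _; rewrite ltrBlDr ltrDl ltr01.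
  have : (`|M''| + 1) <= t * ga.
    have -> : `|M''| + 1 = (`|M''| + 1) / ga * ga by rewrite mulfVK // lt_eqF.
    by rewrite ler_nM2r // ge_min lexx orbT.
  have := LB _ _ (Bz t tr) Ea0; rewrite Ldec /M'' => hh1 hh2.
  have := ler_norm (L a0 - f z.1 - l z.2) => hh3.
  clear -hh1 hh2 hh3; lra.
have lS : forall u, S u -> l u.2 = u.2 a by move=> u Su; apply: Ha; exact: SZ.
have lz2 : l z.2 = z.2 a by apply: Ha.
have [gpos|gz] : 0 < ga \/ ga = 0.
  by move: ga0; rewrite le_eqVlt => /orP [/eqP ->|->]; [right|left].
- set t' := (coupling z + r) / 2.
  have t'r : t' < r by rewrite /t'; lra.
  have ct' : coupling z < t' by rewrite /t'; lra.
  set ig := ga^-1.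
  have ig0 : 0 < ig by rewrite invr_gt0.
  have e1 : forall x, ig * (x * ga) = x.
    by move=> x; rewrite mulrCA mulVf ?mulr1 // gt_eqF.
  have Hu : forall u, S u -> ig * f z.1 + ig * z.2 a + t' < ig * f u.1 + ig * u.2 a + coupling u.
    move=> u Su; have := LB _ _ (Bz t' t'r) (aE u Su).
    rewrite !Ldec (lS u Su) lz2 -(ltr_pM2l ig0) !mulrDr !e1 //.
  pose w := (- ig *: a, fun v => - ig * f v).
  have dw : Zsp w by apply: dual_scale.
  have := @nsz _ _ S V z w (- ig * (f z.1 + z.2 a) - t') SZ aoV NI dz Vz hz dw.
  have hw : forall u, S u -> term w u <= - ig * (f z.1 + z.2 a) - t'.
    move=> u Su; have du := SZ _ Su; have := Hu u Su.
    rewrite /term /w /= (@dualZ _ _ u.2 (- ig) a du) /coupling => hh; clear -hh; lra.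
  move=> /(_ hw); rewrite /w /= (@dualZ _ _ z.2 (- ig) a dz) => hh.
  clear -hh ct'; lra.
- have Lk0 := LK _ Kk0.
  have [d d0 Bd] := Bopen b0 (- (b0 - a0)) Bb0.
  set del := d * L (- (b0 - a0)).
  have del0 : 0 < del by rewrite /del mulr_gt0 // LN oppr_gt0.
  have Hu : forall u, S u -> f z.1 + z.2 a + del < f u.1 + u.2 a.
    move=> u Su; have := LB _ _ Bd (aE u Su).
    rewrite LD LZ -/del Ldec Ldec gz (lS u Su) lz2 !mulr0 !addr0 //.
  pose w := (z.1 - a, fun v => 1 * z.2 v + (-1) * f v).
  have dw : Zsp w by apply: dual_comb.
  have hw : forall u, S u -> term w u <= coupling z - f z.1 - z.2 a - del.
    move=> u Su; have du := SZ _ Su; have := Hu u Su; have := hz u Su.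
    rewrite /term /w /= (@dualB _ _ u.2 z.1 a du) => hh1 hh2; clear -hh1 hh2; lra.
  have := @nsz _ _ S V z w _ SZ aoV NI dz Vz hz dw hw.
  rewrite /w /= (@dualB _ _ z.2 z.1 a dz) /coupling => hh; clear -hh del0; lra.
Qed.
End Key3.

Local Open Scope ring_scope.

Section Fin1.
Context {R : realType} {X : tvsType R}.
Implicit Types (z w u : X * (X -> R)) (S : set (X * (X -> R))).

Lemma mon_refl z : Zsp z -> mon_related z z.
Proof. by move=> dz; rewrite /mon_related !subrr. Qed.

Lemma maxmon_ext S : S `<=` Zsp -> monotone_op S -> S !=set0 ->
  exists T', [/\ T' `<=` Zsp, monotone_op T', S `<=` T' &
    forall z, Zsp z -> ((coupling z)%:E <= fitzpatrick T' z)%E].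
Proof.
move=> SZ mS [s0 Ss0].
pose P := [set A : set (X * (X -> R)) | (A = set0 \/ S `<=` A) /\ A `<=` Zsp /\ monotone_op A].
have [A [[A0 [AZ mA]] Amax]] : exists A, P A /\ forall B, A `<` B -> ~ P B.
  apply: Zorn_bigcup => F FP Ftot.
  have [Fe|[G1 FG1 G1ne]] : (forall G, F G -> G = set0) \/ exists2 G, F G & G !=set0.
    have [h|h] := pselect (exists2 G, F G & G !=set0); [by right|left].
    move=> G FG; apply/nonemptyPn => Gne; apply: h; by exists G.
  - have U0 : \bigcup_(X in F) X = set0.
      by apply/seteqP; split => // z [G FG]; rewrite (Fe _ FG).
    rewrite /P /= U0; split; [by left|split => //].
  have SG1 : S `<=` G1.
    by case: (FP _ FG1) => [[G1e|//] _]; move: G1ne; rewrite G1e => -[].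
  rewrite /P /=; split.
    by right => z Sz; exists G1 => //; exact: SG1.
  split.
    by move=> z [G FG Gz]; case: (FP _ FG) => _ [GZ _]; exact: GZ.
  move=> z w [Ga FGa Gaz] [Gb FGb Gbw].
  have [ab|ba] := Ftot _ _ FGa FGb.
    by case: (FP _ FGb) => _ [_ mG]; apply: mG => //; exact: ab.
  by case: (FP _ FGa) => _ [_ mG]; apply: mG => //; exact: ba.
have SA : S `<=` A.
  case: A0 => // Ae; exfalso; apply: (Amax S).
    by rewrite Ae; split => // /(_ s0 Ss0).
  by split; [right|split].
exists A; split => // z dz.
have [Az|nAz] := pselect (A z).
  by rewrite -term_self; exact: fitz_ub.
rewrite leNgt; apply/negP => /ltW /(fitz_lec AZ dz) rel.
apply: (Amax (A `|` [set z])).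
  split; first by move=> y Ay; left.
  by move=> /(_ z (or_intror erefl)).
split; first by right => y /SA Ay; left.
split.
  by move=> y [/AZ|->].
move=> y y' [Ay|->] [Ay'|->].
- exact: mA.
- by apply: mon_sym => //; [exact: AZ|exact: rel].
- exact: rel.
- exact: mon_refl.
Qed.

End Fin1.

Local Open Scope ring_scope.

Section Fin2.
Context {R : realType} {X : tvsType R}.
Implicit Types (z w u : X * (X -> R)) (S : set (X * (X -> R))).

Lemma eqE (a b : \bar R) : (a <= b)%E -> (b <= a)%E -> a = b.
Proof. by move=> h1 h2; apply/eqP; rewrite eq_le h1 h2. Qed.

Lemma mid_V (V : set X) z w : convex_subset V -> V z.1 -> V w.1 -> V (zcomb (2^-1) z w).1.
Proof.
move=> cV Vz Vw; apply: cV => //; apply/andP; split; first by rewrite invr_ge0 ler0n.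
by rewrite invf_le1 ?ler1n // ltr0n.
Qed.

End Fin2.

Theorem theorem3p4 (R : realType) (X : tvsType R)
  (T : set (X * (X -> R))) (V : set X) :
  hausdorff_space X -> (exists x : X, x != 0) ->
  T `<=` Zsp ->
  V !=set0 -> algebraically_open V -> convex_subset V ->
  nonvoid_op (restr_op T V) -> monotone_op (restr_op T V) -> V_NI V T ->
  let M := eqc_on V (fitzpatrick (restr_op T V)) in
  eqc_on V (psi_hull (restr_op T V)) = M /\
      lec_on V (fitzpatrick (restr_op T V)) = M /\
      (* the unique V-representable extension of T|_V in V x X^* *)
      (restr_op T V `<=` M /\ V_representable V M /\
       forall S, S `<=` Zsp -> S `<=` [set z | V z.1] -> restr_op T V `<=` S ->
         V_representable V S -> S = M) /\
      (* the unique maximal monotone_op extension of T|_V in V x X^* *)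
      (restr_op T V `<=` M /\ maximal_monotone_in V M /\
       forall S, restr_op T V `<=` S -> maximal_monotone_in V S -> S = M) /\
      (nonvoid_op T -> monotone_op T ->
         eqc_on V (fitzpatrick T) = M /\ eqc_on V (psi_hull T) = M) /\
      (nonvoid_op T -> monotone_op T -> V_representable V T ->
         identifies V T /\ M = restr_op T V).
Proof.
move=> _ _ TZ _ aoV cV Sne monS NI M.
set S := restr_op T V.
have SZ : S `<=` Zsp by move=> z [Tz _]; exact: TZ.
have SV : forall z, S z -> V z.1 by move=> z [].
have NI' : forall y, Zsp y -> V y.1 -> ((coupling y)%:E <= fitzpatrick S y)%E := NI.
have phiM : forall z, Zsp z -> V z.1 -> (fitzpatrick S z <= (coupling z)%:E)%E -> M z.
  move=> z dz Vz hz; split => //; split => //; apply: eqE => //; exact: NI'.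
have Mphi : forall z, M z -> (fitzpatrick S z <= (coupling z)%:E)%E.
  by move=> z [_ [_ ->]].
have SM : S `<=` M.
  move=> s Ss; apply: phiM; [exact: SZ|exact: SV|].
  by apply/(fitz_lec SZ (SZ _ Ss)) => u Su; exact: monS.
have K1 : forall z h, M z -> cand S h -> (h z <= (coupling z)%:E)%E.
  move=> z h [dz [Vz hz]] ch; apply: (key_psi SZ Sne aoV NI' dz Vz) => //.
  by apply: fitz_leE; rewrite hz.
have psiM : forall z, M z -> (psi_hull S z <= (coupling z)%:E)%E.
  by move=> z Mz; apply: psi_le => h ch; exact: K1.
have phipsi : forall z, (fitzpatrick S z <= psi_hull S z)%E.
  by move=> z; apply: psi_ge; apply: fitz_cand.
have Mmon : monotone_op M.
  move=> z w [dz [Vz hz]] [dw [Vw hw]].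
  apply: (mid_mon (fitz_convex SZ)) => //; [by rewrite hz|by rewrite hw|].
  by apply: NI'; [exact: Zsp_comb|exact: mid_V].
have MZ : M `<=` Zsp by move=> z [].
have MV : M `<=` [set z | V z.1] by move=> z [_ []].
have [T' [T'Z monT' ST' T'c]] := maxmon_ext SZ monS Sne.
have psic : forall z, Zsp z -> ((coupling z)%:E <= psi_hull S z)%E.
  move=> z dz; apply: le_trans (T'c z dz) _; apply: psi_ge; exact: fitz_cand.
have C1 : eqc_on V (psi_hull S) = M.
  apply/seteqP; split => z [dz [Vz hz]].
    apply: phiM => //; rewrite -hz; exact: phipsi.
  split => //; split => //; apply: eqE; first exact: psiM.
  by rewrite -hz; exact: phipsi.
have C2 : lec_on V (fitzpatrick S) = M.
  apply/seteqP; split => z [dz [Vz hz]]; first exact: phiM.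
  by split => //; split => //; rewrite hz.
have repM : V_representable V M.
  split.
    case: Sne => s0 Ss0; exists s0.1; split; first exact: SV.
    by exists s0.2; case: s0 Ss0 => ? ? /SM.
  exists (psi_hull S); split.
    split.
      move=> z dz; apply/negP => /eqP hz; have := psic z dz; rewrite hz.
      by rewrite leeNy_eq.
    case: Sne => s0 Ss0; exists s0; split; first exact: SZ.
    by apply: le_lt_trans (psiM _ (SM _ Ss0)) _; rewrite ltry.
  split; first exact: psi_convex.
  split; first exact: psi_lsc.
  split; first exact: psic.
  move=> z dz Vz; split.
    move=> hz; have : eqc_on V (psi_hull S) z by [].
    by rewrite C1 => Mz; split.
  move=> [Mz _]; have : eqc_on V (psi_hull S) z by rewrite C1.
  by case=> _ [_ ->].
have maxM : maximal_monotone_in V M.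
  split => //; split => //; split => // z dz Vz rel.
  apply: phiM => //; apply/(fitz_lec SZ dz) => u Su; apply: rel; exact: SM.
split => //; split => //.
split.
  split => //; split => // S' S'Z S'V SS' [_ [h [_ [hc [hl [hge hiff]]]]]].
  have hS' : forall z, S' z -> h z = (coupling z)%:E.
    move=> z S'z; apply/(hiff z (S'Z _ S'z) (S'V _ S'z)); split => //; exact: S'V.
  apply/seteqP; split => z.
    move=> S'z; have dz := S'Z _ S'z; have Vz := S'V _ S'z.
    apply: phiM => //; apply/(fitz_lec SZ dz) => u Su.
    have du := SZ _ Su.
    apply: (mid_mon hc) => //; [by rewrite hS'|by rewrite hS' //; exact: SS'|].
    exact: hge (Zsp_comb _ dz du).
  move=> Mz; have [dz [Vz _]] := Mz.
  have ch : cand S h.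
    apply: candI => // w dw Sw; rewrite hS' //; exact: SS'.
  have hz : h z = (coupling z)%:E by apply: eqE; [exact: K1|exact: hge].
  by have [] := (hiff z dz Vz).1 hz.
split.
  split => //; split => // S'' SS'' [S''Z [S''V [monS'' maxS'']]].
  have S''M : S'' `<=` M.
    move=> z S''z; have dz := S''Z _ S''z.
    apply: phiM => //; first exact: S''V.
    apply/(fitz_lec SZ dz) => u Su; apply: monS'' => //; exact: SS''.
  apply/seteqP; split => // z Mz; have [dz [Vz _]] := Mz.
  apply: maxS'' => // w S''w; apply: Mmon => //; exact: S''M.
have chain : monotone_op T -> forall z, Zsp z -> V z.1 ->
   and3 (fitzpatrick S z <= fitzpatrick T z)%E
   (fitzpatrick T z <= psi_hull T z)%E
   (psi_hull T z <= psi_hull S z)%E.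
  move=> monT z dz Vz; split.
  - apply: ereal_sup_le => _ [u [Tu _] <-]; by exists u.
  - by apply: psi_ge; apply: fitz_cand.
  - apply: psi_le => h ch; apply: psi_ge; have [hc [hl _]] := ch.
    apply: candI => // w dw [Tw _]; exact: (cand_onS ch).
split.
  move=> _ monT; have ch := chain monT.
  split; apply/seteqP; split => z [dz [Vz hz]].
  - have [c1 c2 c3] := ch z dz Vz; apply: phiM => //; rewrite -hz //.
  - have [c1 c2 c3] := ch z dz Vz; split => //; split => //; apply: eqE.
      apply: le_trans c2 _; apply: le_trans c3 _; apply: psiM; by split.
    by apply: le_trans (NI' _ dz Vz) c1.
  - have [c1 c2 c3] := ch z dz Vz; apply: phiM => //; rewrite -hz.
    exact: le_trans c1 c2.
  - have [c1 c2 c3] := ch z dz Vz; split => //; split => //; apply: eqE.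
      apply: le_trans c3 _; apply: psiM; by split.
    by apply: le_trans (NI' _ dz Vz) (le_trans c1 c2).
move=> _ monT [_ [h [_ [hc [hl [hge hiff]]]]]].
have MS : M `<=` S.
  move=> z Mz; have [dz [Vz _]] := Mz.
  have ch : cand S h.
    apply: candI => // w dw Sw; by rewrite ((hiff w dw (SV _ Sw)).2 Sw).
  have hz : h z = (coupling z)%:E by apply: eqE; [exact: K1|exact: hge].
  exact: (hiff z dz Vz).1 hz.
split.
  move=> z dz Vz hz; have : S z by apply: MS; exact: phiM.
  by case.
by apply/seteqP; split.
Qed.
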